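(* A morphism $g:(V,f,h)\to(V',f',h')$ in the category $\mathcal R(P,I)$ is a monomorphism in $\mathcal R(P,I)$ if and only if $g$ is injective (at every vertex), and it is an epimorphism in $\mathcal R(P,I)$ if and only if $g$ is surjective (at every vertex).
   Context: Let $\tilde Q$ be a finite acyclic quiver, $P$ a fixed projective representation and $I$ a fixed injective representation of $\tilde Q$ over $\mathbb C$ (finite-dimensional). The category $\mathcal R(P,I)$ has as objects triples $(V,f,h)$ with $V$ a finite-dimensional representation of $\tilde Q$, $f:P\to V$ and $h:V\to I$ morphisms of representations; a morphism $(V,f,h)\to(V',f',h')$ is a morphism of representations $g:V\to V'$ with $g\circ f=f'$ and $h'\circ g=h$; composition is composition of representation morphisms. *)

(* Defs.v *)
(* Representations of a finite quiver over the complex numbers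
   C := complex R (R = Stdlib reals, a realType via Rstruct), given concretely
   by dimension vectors and matrices acting on ROW vectors (v |-> v *m A). *)
From HB Require Import structures.
From mathcomp Require Import all_boot all_order all_algebra.
From mathcomp Require Import complex.
From mathcomp Require Import Rstruct.
From Stdlib Require Import Reals.
Set Implicit Arguments. Unset Strict Implicit. Unset Printing Implicit Defensive.
Import Order.TTheory GRing.Theory Num.Theory.
Local Open Scope ring_scope.

Definition CC : fieldType := complex Rdefinitions.R.

Record quiver := Quiver {
  Q0 : finType;
  Q1 : finType;
  src : Q1 -> Q0;
  tgt : Q1 -> Q0 }.

Fixpoint is_path (Q : quiver) (x y : Q0 Q) (p : seq (Q1 Q)) : bool :=
  match p with
  | [::] => x == y
  | a :: p' => (src a == x) && is_path (tgt a) y p'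
  end.

Definition acyclic (Q : quiver) : Prop :=
  forall (x : Q0 Q) (p : seq (Q1 Q)), p != [::] -> ~~ is_path x x p.

Record rep (Q : quiver) := Rep {
  rdim : Q0 Q -> nat;
  rmap : forall a : Q1 Q, 'M[CC]_(rdim (src a), rdim (tgt a)) }.

Definition repHom (Q : quiver) (V W : rep Q) :=
  forall i : Q0 Q, 'M[CC]_(rdim V i, rdim W i).

Definition is_rep_mor (Q : quiver) (V W : rep Q) (g : repHom V W) : Prop :=
  forall a : Q1 Q, rmap V a *m g (tgt a) = g (src a) *m rmap W a.

(* Composition "first g then h" (row-vector convention). *)
Definition rcomp (Q : quiver) (U V W : rep Q) (g : repHom U V) (h : repHom V W)
  : repHom U W := fun i => g i *m h i.

Definition rep_mono (Q : quiver) (V W : rep Q) (g : repHom V W) : Prop :=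
  forall (U : rep Q) (a b : repHom U V), is_rep_mor a -> is_rep_mor b ->
    (forall i, rcomp a g i = rcomp b g i) -> forall i, a i = b i.

Definition rep_epi (Q : quiver) (V W : rep Q) (g : repHom V W) : Prop :=
  forall (U : rep Q) (a b : repHom W U), is_rep_mor a -> is_rep_mor b ->
    (forall i, rcomp g a i = rcomp g b i) -> forall i, a i = b i.

Definition rep_projective (Q : quiver) (P : rep Q) : Prop :=
  forall (M N : rep Q) (p : repHom M N), is_rep_mor p -> rep_epi p ->
  forall f : repHom P N, is_rep_mor f ->
  exists f' : repHom P M, is_rep_mor f' /\ forall i, rcomp f' p i = f i.

Definition rep_injective (Q : quiver) (I : rep Q) : Prop :=
  forall (M N : rep Q) (j : repHom M N), is_rep_mor j -> rep_mono j ->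
  forall h : repHom M I, is_rep_mor h ->
  exists h' : repHom N I, is_rep_mor h' /\ forall i, rcomp j h' i = h i.

Record RObj (Q : quiver) (P I : rep Q) := RObject {
  RV : rep Q;
  Rf : repHom P RV;
  Rh : repHom RV I;
  Rf_mor : is_rep_mor Rf;
  Rh_mor : is_rep_mor Rh }.

Definition is_R_mor (Q : quiver) (P I : rep Q) (X Y : RObj P I)
  (g : repHom (RV X) (RV Y)) : Prop :=
  [/\ is_rep_mor g,
      forall i, rcomp (Rf X) g i = Rf Y i &
      forall i, rcomp g (Rh Y) i = Rh X i].
Arguments is_R_mor {Q P I} X Y g.

Definition R_mono (Q : quiver) (P I : rep Q) (X Y : RObj P I)
  (g : repHom (RV X) (RV Y)) : Prop :=
  forall (Z : RObj P I) (a b : repHom (RV Z) (RV X)),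
    is_R_mor Z X a -> is_R_mor Z X b ->
    (forall i, rcomp a g i = rcomp b g i) -> forall i, a i = b i.
Arguments R_mono {Q P I} X Y g.

Definition R_epi (Q : quiver) (P I : rep Q) (X Y : RObj P I)
  (g : repHom (RV X) (RV Y)) : Prop :=
  forall (Z : RObj P I) (a b : repHom (RV Y) (RV Z)),
    is_R_mor Y Z a -> is_R_mor Y Z b ->
    (forall i, rcomp g a i = rcomp g b i) -> forall i, a i = b i.
Arguments R_epi {Q P I} X Y g.

Definition vertexwise_injective (Q : quiver) (V W : rep Q) (g : repHom V W) : Prop :=
  forall i, injective (fun v : 'rV[CC]_(rdim V i) => v *m g i).

Definition vertexwise_surjective (Q : quiver) (V W : rep Q) (g : repHom V W) : Prop :=
  forall i (w : 'rV[CC]_(rdim W i)), exists v : 'rV[CC]_(rdim V i), v *m g i = w.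

(* Main.v *)
Require Import Defs.
From mathcomp Require Import all_boot all_order all_algebra.
Set Implicit Arguments. Unset Strict Implicit. Unset Printing Implicit Defensive.
Import GRing.Theory.
Local Open Scope ring_scope.

Section Helpers.
Variable Q : quiver.

Definition sumRep (V K : rep Q) : rep Q :=
  @Rep Q (fun i => (rdim V i + rdim K i)%N)
    (fun a => block_mx (rmap V a) 0 0 (rmap K a)).

Definition kerRep (V W : rep Q) (g : repHom V W) : rep Q :=
  @Rep Q (rdim V) (fun a => kermx (g (src a)) *m rmap V a *m pinvmx (kermx (g (tgt a)))).

Lemma kerRep_mor (V W : rep Q) (g : repHom V W) : is_rep_mor g ->
  @is_rep_mor Q (kerRep g) V (fun i => kermx (g i)).
Proof.
move=> hg a; cbn [rmap rdim sumRep kerRep]; rewrite mulmxKpV //.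
by rewrite sub_kermx -mulmxA hg mulmxA mulmx_ker mul0mx.
Qed.

Lemma trsolve (p r : nat) (qs : 'M[CC]_(p,p)) (T : 'M[CC]_(p,r)) :
  (T^T <= qs^T)%MS -> qs *m (T^T *m pinvmx qs^T)^T = T.
Proof. by move=> H; apply: trmx_inj; rewrite trmx_mul trmxK mulmxKpV. Qed.

Definition cokRep (V W : rep Q) (g : repHom V W) : rep Q :=
  @Rep Q (rdim W) (fun a =>
    ((rmap W a *m (kermx (g (tgt a))^T)^T)^T *m pinvmx ((kermx (g (src a))^T)^T)^T)^T).

Lemma cokRep_mor (V W : rep Q) (g : repHom V W) : is_rep_mor g ->
  @is_rep_mor Q W (cokRep g) (fun i => (kermx (g i)^T)^T).
Proof.
move=> hg a; cbn [rmap rdim sumRep kerRep cokRep]; rewrite trsolve //.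
rewrite trmx_mul !trmxK sub_kermx -mulmxA -trmx_mul -hg trmx_mul mulmxA mulmx_ker.
by rewrite mul0mx.
Qed.

Lemma row_mor (P V K : rep Q) (f : repHom P V) : is_rep_mor f ->
  @is_rep_mor Q P (sumRep V K) (fun i => row_mx (f i) 0).
Proof.
move=> hf a; cbn [rmap rdim sumRep kerRep cokRep]; rewrite mul_mx_row mul_row_block ?mulmx0 ?mul0mx ?addr0 hf //.
Qed.

Lemma col_mor (V K I : rep Q) (h : repHom V I) : is_rep_mor h ->
  @is_rep_mor Q (sumRep V K) I (fun i => col_mx (h i) 0).
Proof.
move=> hh a; cbn [rmap rdim sumRep kerRep cokRep]. rewrite mul_block_col mul_col_mx ?mulmx0 ?mul0mx ?addr0 hh //.
Qed.

Lemma colE_mor (V K : rep Q) (e : repHom K V) : is_rep_mor e ->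
  @is_rep_mor Q (sumRep V K) V (fun i => col_mx 1%:M (e i)).
Proof.
move=> he a; cbn [rmap rdim sumRep kerRep cokRep]; rewrite mul_block_col mul_col_mx ?mulmx0 ?mul0mx ?mulmx1 ?mul1mx.
by rewrite ?addr0 ?add0r he.
Qed.

Lemma rowE_mor (V K : rep Q) (q : repHom V K) : is_rep_mor q ->
  @is_rep_mor Q V (sumRep V K) (fun i => row_mx 1%:M (q i)).
Proof.
move=> hq a; cbn [rmap rdim sumRep kerRep cokRep]; rewrite mul_mx_row mul_row_block ?mulmx0 ?mul0mx ?mulmx1 ?mul1mx.
by rewrite ?addr0 ?add0r hq.
Qed.

Lemma zero_mor (V K : rep Q) : @is_rep_mor Q V K (fun i => 0).
Proof. by move=> a; rewrite mulmx0 mul0mx. Qed.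

End Helpers.

Theorem mainTheorem12 (Q : quiver) (hQ : acyclic Q) (P I : rep Q)
  (hP : rep_projective P) (hI : rep_injective I)
  (X Y : RObj P I) (g : repHom (RV X) (RV Y)) (hg : is_R_mor X Y g) :
  (R_mono X Y g <-> vertexwise_injective g) /\
  (R_epi X Y g <-> vertexwise_surjective g).
Proof.
case: hg => hgm hgf hgh.
split; split.
- move=> hm i.
  pose K := kerRep g.
  pose Z := @RObject Q P I (sumRep (RV X) K) (fun i => row_mx (Rf X i) 0)
     (fun i => col_mx (Rh X i) 0) (row_mor K (Rf_mor X)) (col_mor K (Rh_mor X)).
  have ha : is_R_mor Z X (fun i => col_mx 1%:M 0).
    split; first exact: (colE_mor (zero_mor K (RV X))).
    + by move=> j; rewrite /rcomp /= mul_row_col mulmx1 mul0mx addr0.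
    + by move=> j; rewrite /rcomp /= mul_col_mx mul1mx mul0mx.
  have hb : is_R_mor Z X (fun i => col_mx 1%:M (kermx (g i))).
    split; first exact: (colE_mor (kerRep_mor hgm)).
    + by move=> j; rewrite /rcomp /= mul_row_col mulmx1 mul0mx addr0.
    + move=> j; rewrite /rcomp /= mul_col_mx mul1mx -hgh /rcomp mulmxA mulmx_ker.
      by rewrite mul0mx.
  have : (fun i => col_mx 1%:M 0) i = (fun i => col_mx 1%:M (kermx (g i))) i.
    apply: (hm Z _ _ ha hb) => j.
    by rewrite /rcomp !mul_col_mx mul0mx mulmx_ker.
  move/eq_col_mx => [_ /esym/eqP]; rewrite kermx_eq0 => hf.
  exact: row_free_inj.
- move=> hinj Z a b ha hb hab i; apply/row_matrixP => j.
  apply: (hinj i); rewrite /= -!row_mul.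
  by have := hab i; rewrite /rcomp => ->.
- move=> he i.
  pose C := cokRep g.
  pose q := fun i => (kermx (g i)^T)^T.
  have gq : forall i, g i *m q i = 0.
    move=> k; have := congr1 trmx (mulmx_ker (g k)^T).
    by rewrite trmx_mul trmxK trmx0.
  pose Z := @RObject Q P I (sumRep (RV Y) C) (fun i => row_mx (Rf Y i) 0)
     (fun i => col_mx (Rh Y i) 0) (row_mor C (Rf_mor Y)) (col_mor C (Rh_mor Y)).
  have ha : is_R_mor Y Z (fun i => row_mx 1%:M 0).
    split; first exact: (rowE_mor (zero_mor (RV Y) C)).
    + by move=> j; rewrite /rcomp /= mul_mx_row mulmx1 mulmx0.
    + by move=> j; rewrite /rcomp /= mul_row_col mul1mx mul0mx addr0.
  have hb : is_R_mor Y Z (fun i => row_mx 1%:M (q i)).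
    split; first exact: (rowE_mor (cokRep_mor hgm)).
    + move=> j; rewrite /rcomp /= mul_mx_row mulmx1 -hgf /rcomp -mulmxA gq.
      by rewrite mulmx0.
    + by move=> j; rewrite /rcomp /= mul_row_col mul1mx mulmx0 addr0.
  have : (fun i => row_mx 1%:M 0) i = (fun i => row_mx 1%:M (q i)) i.
    apply: (he Z _ _ ha hb) => j.
    by rewrite /rcomp !mul_mx_row mulmx0 gq.
  move/eq_row_mx => [_ hq0].
  have hk : kermx (g i)^T = 0.
    by rewrite -[kermx _]trmxK -/(q i) -hq0 trmx0.
  move/eqP: hk; rewrite kermx_eq0 => hrf w.
  have hfull : row_full (g i).
    by rewrite /row_full -mxrank_tr; move: hrf; rewrite /row_free.
  exists (w *m pinvmx (g i)); rewrite mulmxKpV //.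
  exact: submx_full.
- move=> hs Z a b ha hb hab i; apply/row_matrixP => j.
  have [v hv] := hs i (delta_mx 0 j).
  rewrite !rowE -hv -!mulmxA.
  by have := hab i; rewrite /rcomp => ->.
Qed.
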